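(* Let $E$ be an elementary wqo given by an expression in normal form. For every finite subset $S\subseteq E$ there exists $E'<_{\mathrm{approx}}E$ such that $\downarrow_E S\le_{\mathrm{cond+st}}E'$.
   Context: A wqo is a quasi-order in which every infinite sequence has $i<j$ with $x_i\le x_j$. Multiplicatively indecomposable ordinals $\ge\omega$ are those of the form $\omega^{\omega^\gamma}$; an ordinal $\alpha$ is viewed as the wqo $(\alpha,\le)$. Constructions: $E_1\sqcup E_2$ disjoint union ordered by $\le_{E_1}\cup\le_{E_2}$; $E_1\times E_2$ Cartesian product with componentwise order; $E^{<\omega}$ finite words with subword embedding; $\mathsf{M}^\diamond(E)$ finite multisets with multiset embedding, and $\mathsf{M}^\diamond_n(E)$ its restriction to multisets of exactly $n$ elements; $\mathcal{P}_f(E)$ finite subsets with Hoare embedding ($S\le_H S'$ iff $\forall a\in S\,\exists b\in S'\,a\le b$); $E^{\times n}$ the $n$-fold Cartesian power. Elementary wqos are given by expressions of the grammar $E::=\alpha\ (\alpha\ge\omega^\omega\text{ multiplicatively indecomposable})\mid E_1\sqcup E_2\mid E_1\times E_2\mid E^{<\omega}\mid\mathsf{M}^\diamond(E)\mid\mathcal{P}_f(E)$; such an expression is in normal form if no subexpression can be rewritten by the rules $\mathcal{P}_f(\alpha)\to\alpha$; $E\times(E_1\sqcup E_2)\to(E\times E_1)\sqcup(E\times E_2)$; $(E_1\sqcup E_2)\times E\to(E_1\times E)\sqcup(E_2\times E)$; $\mathsf{M}^\diamond(E_1\sqcup E_2)\to\mathsf{M}^\diamond(E_1)\times\mathsf{M}^\diamond(E_2)$;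 $\mathcal{P}_f(E_1\sqcup E_2)\to\mathcal{P}_f(E_1)\times\mathcal{P}_f(E_2)$. Two wqos are wpo-isomorphic ($\cong_{wpo}$) if their quotients by $x\equiv y\iff x\le y\le x$ are isomorphic. Approximation $E'<_{\mathrm{approx}}E$ (by recursion on the expression $E$): if $E=\alpha$, $E'\cong_{wpo}\alpha'$ for some $\alpha'<\alpha$; if $E=E_1\sqcup E_2$ (resp. $E_1\times E_2$), $E'\cong_{wpo}E_1'\sqcup E_2'$ (resp. $E_1'\times E_2'$) with $E_i'<_{\mathrm{approx}}E_i$; if $E=E_1^{<\omega}$, $E'\cong_{wpo}(E_1')^{\times n}$ with $E_1'<_{\mathrm{approx}}E_1$, $n<\omega$; if $E=\mathsf{M}^\diamond(E_1)$, $E'\cong_{wpo}\mathsf{M}^\diamond_n(E_1')$ with $E_1'<_{\mathrm{approx}}E_1$, $n<\omega$; if $E=\mathcal{P}_f(E_1)$, $E'\cong_{wpo}\mathcal{P}_f(E_1')$ with $E_1'<_{\mathrm{approx}}E_1$. $\downarrow_E S=\{x\in E:\exists y\in S,\ x\le y\}$ with the induced ordering. A map $f:A\to B$ between wqos is a condensation if it is surjective, monotone, and whenever $b\le_B f(y)$ there exists $x\le_A y$ with $f(x)=b$; $B\le_{\mathrm{cond}}A$ means there is a condensation from $A$ to $B$. $B\le_{\mathrm{st}}A$ means $B$ is isomorphic to a subset of $A$ with the restricted ordering. $\le_{\mathrm{cond+st}}$ is the transitive closure of the union of $\le_{\mathrm{cond}}$ and $\le_{\mathrm{st}}$. *)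

(* Defs.v *)
From Stdlib Require Import List Relations.
Import ListNotations.

Record ordinal := Ordinal {
  ocar : Type;
  olt : ocar -> ocar -> Prop;
  olt_wf : well_founded olt;
  olt_trans : forall x y z, olt x y -> olt y z -> olt x z;
  olt_total : forall x y, olt x y \/ x = y \/ olt y x }.

(** * Ordinal exponentiation omega^beta via Cantor normal forms:
    elements of omega^beta are the finite sums omega^b1*n1 + ... + omega^bk*nk
    with b1 > ... > bk in beta and ni > 0, ordered lexicographically. *)
Inductive cnf_valid {A : Type} (R : A -> A -> Prop) : list (A * nat) -> Prop :=
| cnf_v_nil : cnf_valid R []
| cnf_v_one a n : 0 < n -> cnf_valid R [(a, n)]
| cnf_v_cons a n b m l : 0 < n -> R b a -> cnf_valid R ((b, m) :: l) ->
    cnf_valid R ((a, n) :: (b, m) :: l).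

Inductive cnf_lt {A : Type} (R : A -> A -> Prop) : list (A * nat) -> list (A * nat) -> Prop :=
| cnf_lt_nil p l : cnf_lt R [] (p :: l)
| cnf_lt_exp a b n m l l' : R a b -> cnf_lt R ((a, n) :: l) ((b, m) :: l')
| cnf_lt_coef a n m l l' : n < m -> cnf_lt R ((a, n) :: l) ((a, m) :: l')
| cnf_lt_tail p l l' : cnf_lt R l l' -> cnf_lt R (p :: l) (p :: l').

(** Elements of omega^(omega^g) in Cantor normal form. *)
Definition ww_valid (g : ordinal) (l : list (list (ocar g * nat) * nat)) : Prop :=
  cnf_valid (cnf_lt (olt g)) l /\ Forall (fun p => cnf_valid (olt g) (fst p)) l.

Definition ww_lt (g : ordinal) := cnf_lt (cnf_lt (olt g)).

(** alpha is a multiplicatively indecomposable ordinal >= omega^omega, i.e.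
    alpha is order-isomorphic to omega^(omega^g) for some ordinal g >= 1. *)
Definition mult_indec_big (a : ordinal) : Prop :=
  exists (g : ordinal) (h : ocar a -> list (list (ocar g * nat) * nat)),
    inhabited (ocar g) /\
    (forall x, ww_valid g (h x)) /\
    (forall l, ww_valid g l -> exists x, h x = l) /\
    (forall x y, olt a x y <-> ww_lt g (h x) (h y)).

Record qo := QO { car : Type; le : car -> car -> Prop }.

Definition ord_qo (a : ordinal) : qo := QO (ocar a) (fun x y => olt a x y \/ x = y).

Definition qsum (A B : qo) : qo :=
  QO (car A + car B)%type
     (fun x y => match x, y with
                 | inl a, inl b => le A a b
                 | inr a, inr b => le B a b
                 | _, _ => False end).

Definition qprod (A B : qo) : qo :=
  QO (car A * car B)%type (fun x y => le A (fst x) (fst y) /\ le B (snd x) (snd y)).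

Inductive subword {A : Type} (R : A -> A -> Prop) : list A -> list A -> Prop :=
| sw_nil l : subword R [] l
| sw_skip l1 y l2 : subword R l1 l2 -> subword R l1 (y :: l2)
| sw_keep x y l1 l2 : R x y -> subword R l1 l2 -> subword R (x :: l1) (y :: l2).

Definition qwords (A : qo) : qo := QO (list (car A)) (subword (le A)).

(** multiset embedding: an injection f with x <= f x (multisets as lists) *)
Inductive msemb {A : Type} (R : A -> A -> Prop) : list A -> list A -> Prop :=
| ms_nil l : msemb R [] l
| ms_cons x y l1 l2a l2b : R x y -> msemb R l1 (l2a ++ l2b) ->
    msemb R (x :: l1) (l2a ++ y :: l2b).

Definition qmset (A : qo) : qo := QO (list (car A)) (msemb (le A)).

Definition qmsetn (A : qo) (n : nat) : qo :=
  QO {l : list (car A) | length l = n} (fun x y => msemb (le A) (proj1_sig x) (proj1_sig y)).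

Definition qpow (A : qo) (n : nat) : qo :=
  QO {l : list (car A) | length l = n} (fun x y => Forall2 (le A) (proj1_sig x) (proj1_sig y)).

(** Hoare ordering on finite subsets (represented by lists) *)
Definition hoare {A : Type} (R : A -> A -> Prop) (S S' : list A) : Prop :=
  forall a, In a S -> exists b, In b S' /\ R a b.

Definition qpf (A : qo) : qo := QO (list (car A)) (hoare (le A)).

Inductive expr : Type :=
| EOrd (a : ordinal)
| ESum (e1 e2 : expr)
| EProd (e1 e2 : expr)
| EWords (e : expr)
| EMset (e : expr)
| EPf (e : expr).

Fixpoint sem (e : expr) : qo :=
  match e with
  | EOrd a => ord_qo a
  | ESum e1 e2 => qsum (sem e1) (sem e2)
  | EProd e1 e2 => qprod (sem e1) (sem e2)
  | EWords e1 => qwords (sem e1)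
  | EMset e1 => qmset (sem e1)
  | EPf e1 => qpf (sem e1)
  end.

Fixpoint elementary (e : expr) : Prop :=
  match e with
  | EOrd a => mult_indec_big a
  | ESum e1 e2 | EProd e1 e2 => elementary e1 /\ elementary e2
  | EWords e1 | EMset e1 | EPf e1 => elementary e1
  end.

Definition is_sum (e : expr) : Prop := match e with ESum _ _ => True | _ => False end.
Definition is_ord (e : expr) : Prop := match e with EOrd _ => True | _ => False end.

(** no subexpression is a redex of the rewriting rules *)
Fixpoint normal_form (e : expr) : Prop :=
  match e with
  | EOrd _ => True
  | ESum e1 e2 => normal_form e1 /\ normal_form e2
  | EProd e1 e2 => normal_form e1 /\ normal_form e2 /\ ~ is_sum e1 /\ ~ is_sum e2
  | EWords e1 => normal_form e1
  | EMset e1 => normal_form e1 /\ ~ is_sum e1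
  | EPf e1 => normal_form e1 /\ ~ is_sum e1 /\ ~ is_ord e1
  end.

(** * wpo-isomorphism: the quotients by x<=y<=x are isomorphic, i.e. there is
    an order-embedding f : A -> B that is surjective up to equivalence. *)
Definition wpo_iso (A B : qo) : Prop :=
  exists f : car A -> car B,
    (forall x y, le A x y <-> le B (f x) (f y)) /\
    (forall b, exists a, le B (f a) b /\ le B b (f a)).

Definition segment (a : ordinal) (t : ocar a) : qo :=
  QO {x : ocar a | olt a x t}
     (fun x y => olt a (proj1_sig x) (proj1_sig y) \/ proj1_sig x = proj1_sig y).

Fixpoint approx (e : expr) (E' : qo) : Prop :=
  match e with
  | EOrd a => exists t : ocar a, wpo_iso E' (segment a t)
  | ESum e1 e2 => exists E1 E2, approx e1 E1 /\ approx e2 E2 /\ wpo_iso E' (qsum E1 E2)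
  | EProd e1 e2 => exists E1 E2, approx e1 E1 /\ approx e2 E2 /\ wpo_iso E' (qprod E1 E2)
  | EWords e1 => exists E1 n, approx e1 E1 /\ wpo_iso E' (qpow E1 n)
  | EMset e1 => exists E1 n, approx e1 E1 /\ wpo_iso E' (qmsetn E1 n)
  | EPf e1 => exists E1, approx e1 E1 /\ wpo_iso E' (qpf E1)
  end.

Definition downset (E : qo) (S : list (car E)) : qo :=
  QO {x : car E | exists y, In y S /\ le E x y}
     (fun x y => le E (proj1_sig x) (proj1_sig y)).

Definition is_condensation (A B : qo) (f : car A -> car B) : Prop :=
  (forall b, exists a, f a = b) /\
  (forall x y, le A x y -> le B (f x) (f y)) /\
  (forall b y, le B b (f y) -> exists x, le A x y /\ f x = b).

Definition le_cond (B A : qo) : Prop := exists f : car A -> car B, is_condensation A B f.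

Definition le_st (B A : qo) : Prop :=
  exists f : car B -> car A,
    (forall x y, f x = f y -> x = y) /\ (forall x y, le B x y <-> le A (f x) (f y)).

Definition le_cond_st : qo -> qo -> Prop :=
  clos_trans qo (fun B A => le_cond B A \/ le_st B A).

(* Main.v *)
Require Import Defs.
From Stdlib Require Import List Relations Lia Arith Permutation ProofIrrelevance ClassicalEpsilon.
Import ListNotations.

Lemma cs_cond A B : le_cond A B -> le_cond_st A B.
Proof. intro H; apply t_step; left; exact H. Qed.
Lemma cs_st A B : le_st A B -> le_cond_st A B.
Proof. intro H; apply t_step; right; exact H. Qed.
Lemma cs_trans A B C : le_cond_st A B -> le_cond_st B C -> le_cond_st A C.
Proof. intros; eapply t_trans; eauto. Qed.

Lemma cs_functor (F : qo -> qo) :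
  (forall A B, le_cond A B -> le_cond (F A) (F B)) ->
  (forall A B, le_st A B -> le_st (F A) (F B)) ->
  forall A B, le_cond_st A B -> le_cond_st (F A) (F B).
Proof.
  intros Hc Hs A B H; induction H as [x y [H|H]|x y z _ IH1 _ IH2].
  - apply cs_cond; auto.
  - apply cs_st; auto.
  - eapply cs_trans; eauto.
Qed.

Lemma cond_sum_l A A' B : le_cond A A' -> le_cond (qsum A B) (qsum A' B).
Proof.
  intros [f [Hs [Hm Hl]]].
  exists (fun x : car (qsum A' B) => match x with inl a => inl (f a) | inr b => inr b end).
  split; [|split].
  - intros [a|b]; [destruct (Hs a) as [a' <-]; exists (inl a')|exists (inr b)]; reflexivity.
  - intros [a|b] [a'|b']; simpl; auto; contradiction.
  - intros [a|b] [a'|b']; simpl; try contradiction.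
    + intro H; destruct (Hl a a' H) as [x [Hx <-]]; exists (inl x); auto.
    + intro H; exists (inr b); auto.
Qed.

Lemma cond_sum_r A B B' : le_cond B B' -> le_cond (qsum A B) (qsum A B').
Proof.
  intros [f [Hs [Hm Hl]]].
  exists (fun x : car (qsum A B') => match x with inl a => inl a | inr b => inr (f b) end).
  split; [|split].
  - intros [a|b]; [exists (inl a)|destruct (Hs b) as [b' <-]; exists (inr b')]; reflexivity.
  - intros [a|b] [a'|b']; simpl; auto; contradiction.
  - intros [a|b] [a'|b']; simpl; try contradiction.
    + intro H; exists (inl a); auto.
    + intro H; destruct (Hl b b' H) as [x [Hx <-]]; exists (inr x); auto.
Qed.

Lemma st_sum_l A A' B : le_st A A' -> le_st (qsum A B) (qsum A' B).
Proof.
  intros [f [Hi Ho]].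
  exists (fun x : car (qsum A B) => match x with inl a => inl (f a) | inr b => inr b end).
  split.
  - intros [a|b] [a'|b'] H; inversion H; f_equal; auto.
  - intros [a|b] [a'|b']; simpl; try tauto; apply Ho.
Qed.

Lemma st_sum_r A B B' : le_st B B' -> le_st (qsum A B) (qsum A B').
Proof.
  intros [f [Hi Ho]].
  exists (fun x : car (qsum A B) => match x with inl a => inl a | inr b => inr (f b) end).
  split.
  - intros [a|b] [a'|b'] H; inversion H; f_equal; auto.
  - intros [a|b] [a'|b']; simpl; try tauto; apply Ho.
Qed.

Lemma cs_sum A A' B B' : le_cond_st A A' -> le_cond_st B B' ->
  le_cond_st (qsum A B) (qsum A' B').
Proof.
  intros H1 H2. eapply cs_trans.
  - apply (cs_functor (fun X => qsum X B)); [intros; apply cond_sum_l; auto|intros; apply st_sum_l; auto|exact H1].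
  - apply (cs_functor (fun X => qsum A' X)); [intros; apply cond_sum_r; auto|intros; apply st_sum_r; auto|exact H2].
Qed.

Lemma cond_prod_l A A' B : le_cond A A' -> le_cond (qprod A B) (qprod A' B).
Proof.
  intros [f [Hs [Hm Hl]]].
  exists (fun x : car (qprod A' B) => (f (fst x), snd x)).
  split; [|split].
  - intros [a b]; destruct (Hs a) as [a' <-]; exists (a', b); reflexivity.
  - intros [a b] [a' b'] [H1 H2]; simpl in *; auto.
  - intros [a b] [a' b'] [H1 H2]; simpl in *.
    destruct (Hl a a' H1) as [x [Hx <-]]; exists (x, b); simpl; auto.
Qed.

Lemma cond_prod_r A B B' : le_cond B B' -> le_cond (qprod A B) (qprod A B').
Proof.
  intros [f [Hs [Hm Hl]]].
  exists (fun x : car (qprod A B') => (fst x, f (snd x))).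
  split; [|split].
  - intros [a b]; destruct (Hs b) as [b' <-]; exists (a, b'); reflexivity.
  - intros [a b] [a' b'] [H1 H2]; simpl in *; auto.
  - intros [a b] [a' b'] [H1 H2]; simpl in *.
    destruct (Hl b b' H2) as [x [Hx <-]]; exists (a, x); simpl; auto.
Qed.

Lemma st_prod_l A A' B : le_st A A' -> le_st (qprod A B) (qprod A' B).
Proof.
  intros [f [Hi Ho]].
  exists (fun x : car (qprod A B) => (f (fst x), snd x)).
  split.
  - intros [a b] [a' b'] H; inversion H; f_equal; auto.
  - intros [a b] [a' b']; simpl; rewrite Ho; tauto.
Qed.

Lemma st_prod_r A B B' : le_st B B' -> le_st (qprod A B) (qprod A B').
Proof.
  intros [f [Hi Ho]].
  exists (fun x : car (qprod A B) => (fst x, f (snd x))).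
  split.
  - intros [a b] [a' b'] H; inversion H; f_equal; auto.
  - intros [a b] [a' b']; simpl; rewrite Ho; tauto.
Qed.

Lemma cs_prod A A' B B' : le_cond_st A A' -> le_cond_st B B' ->
  le_cond_st (qprod A B) (qprod A' B').
Proof.
  intros H1 H2. eapply cs_trans.
  - apply (cs_functor (fun X => qprod X B)); [intros; apply cond_prod_l; auto|intros; apply st_prod_l; auto|exact H1].
  - apply (cs_functor (fun X => qprod A' X)); [intros; apply cond_prod_r; auto|intros; apply st_prod_r; auto|exact H2].
Qed.

Lemma surj_list {A B} (f : A -> B) : (forall b, exists a, f a = b) ->
  forall bs, exists xs, map f xs = bs.
Proof.
  intros Hs bs; induction bs as [|b bs IH]; [exists []; reflexivity|].
  destruct (Hs b) as [a Ha]; destruct IH as [xs Hx]; exists (a :: xs); simpl; congruence.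
Qed.

Lemma Forall2_lift {A B : qo} (f : car A -> car B) :
  (forall b y, le B b (f y) -> exists x, le A x y /\ f x = b) ->
  forall bs ys, Forall2 (le B) bs (map f ys) -> exists xs, Forall2 (le A) xs ys /\ map f xs = bs.
Proof.
  intros Hl bs; induction bs as [|b bs IH]; intros ys H.
  - exists []; inversion H; destruct ys; try discriminate; split; constructor.
  - destruct ys as [|y ys]; inversion H; subst.
    destruct (Hl _ _ H3) as [x [Hx Hfx]]; destruct (IH _ H5) as [xs [Hxs Hf]].
    exists (x :: xs); split; [constructor; auto|simpl; congruence].
Qed.

Lemma Forall2_map_mono {A B C D} (R : A -> B -> Prop) (R' : C -> D -> Prop) f g :
  (forall x y, R x y -> R' (f x) (g y)) ->
  forall xs ys, Forall2 R xs ys -> Forall2 R' (map f xs) (map g ys).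
Proof. intros H xs ys H2; induction H2; simpl; constructor; auto. Qed.

Lemma Forall2_map_refl {A B C D} (R : A -> B -> Prop) (R' : C -> D -> Prop) f g :
  (forall x y, R' (f x) (g y) -> R x y) ->
  forall xs ys, Forall2 R' (map f xs) (map g ys) -> Forall2 R xs ys.
Proof.
  intros H xs; induction xs as [|x xs IH]; intros [|y ys] H2; simpl in H2; inversion H2; subst; constructor; auto.
Qed.

Lemma map_inj {A B} (f : A -> B) : (forall x y, f x = f y -> x = y) ->
  forall xs ys, map f xs = map f ys -> xs = ys.
Proof.
  intros Hi xs; induction xs as [|x xs IH]; intros [|y ys] H; simpl in H; try discriminate; auto.
  inversion H; f_equal; auto.
Qed.

Lemma sig_ext {A} (P : A -> Prop) (x y : {a | P a}) : proj1_sig x = proj1_sig y -> x = y.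
Proof.
  destruct x as [x p], y as [y q]; simpl; intros ->; f_equal; apply proof_irrelevance.
Qed.

Definition pow_map {A B : qo} (n : nat) (f : car A -> car B) (x : car (qpow A n)) : car (qpow B n) :=
  exist _ (map f (proj1_sig x)) (eq_trans (length_map f _) (proj2_sig x)).

Lemma cond_pow A B n : le_cond A B -> le_cond (qpow A n) (qpow B n).
Proof.
  intros [f [Hs [Hm Hl]]]. exists (pow_map n f). split; [|split].
  - intros [b Hb]. destruct (surj_list f Hs b) as [xs Hx].
    assert (Hlen : length xs = n) by (rewrite <- Hb, <- Hx, length_map; reflexivity).
    exists (exist _ xs Hlen). apply sig_ext; simpl; auto.
  - intros [x Hx] [y Hy]; simpl; apply Forall2_map_mono; auto.
  - intros [b Hb] [y Hy]; simpl; intro H.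
    destruct (Forall2_lift f Hl _ _ H) as [xs [Hxs Hf]].
    assert (Hlen : length xs = n) by (rewrite (Forall2_length Hxs); auto).
    exists (exist _ xs Hlen); split; [exact Hxs|apply sig_ext; simpl; auto].
Qed.

Lemma st_pow A B n : le_st A B -> le_st (qpow A n) (qpow B n).
Proof.
  intros [f [Hi Ho]]. exists (pow_map n f). split.
  - intros [x Hx] [y Hy] H; apply sig_ext; simpl.
    apply (f_equal (@proj1_sig _ _)) in H; simpl in H; eapply map_inj; eauto.
  - intros [x Hx] [y Hy]; simpl; split.
    + apply Forall2_map_mono; intros; apply Ho; auto.
    + apply Forall2_map_refl; intros; apply Ho; auto.
Qed.

Lemma cs_pow A B n : le_cond_st A B -> le_cond_st (qpow A n) (qpow B n).
Proof. apply (cs_functor (fun X => qpow X n)); intros; [apply cond_pow|apply st_pow]; auto. Qed.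

Lemma msemb_perm {A} (R : A -> A -> Prop) l1 l2 :
  msemb R l1 l2 <-> exists p r, Permutation l2 (p ++ r) /\ Forall2 R l1 p.
Proof.
  split.
  - intro H; induction H as [l|x y l1 l2a l2b Hxy H [p [r [Hp Hf]]]].
    + exists [], l; split; [apply Permutation_refl|constructor].
    + exists (y :: p), r; split; [|constructor; auto].
      eapply Permutation_trans; [apply Permutation_sym, Permutation_middle|].
      simpl; apply perm_skip; exact Hp.
  - intros [p [r [Hp Hf]]]; revert l2 Hp; induction Hf as [|x y l1' p' Hxy Hf IH]; intros l2 Hp.
    + constructor.
    + assert (Hin : In y l2) by (apply (Permutation_in y (Permutation_sym Hp)); simpl; auto).
      destruct (in_split _ _ Hin) as [l2a [l2b ->]].
      constructor; [exact Hxy|]. apply IH.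
      apply (Permutation_app_inv l2a l2b [] (p' ++ r) y); simpl; exact Hp.
Qed.

Lemma msemb_lift {A B : qo} (f : car A -> car B) :
  (forall b y, le B b (f y) -> exists x, le A x y /\ f x = b) ->
  forall bs ys, msemb (le B) bs (map f ys) -> exists xs, msemb (le A) xs ys /\ map f xs = bs.
Proof.
  intros Hl bs ys H. apply msemb_perm in H as [p [r [Hp Hf]]].
  destruct (Permutation_map_inv _ _ (Permutation_sym Hp)) as [y' [Hy' Hpy]].
  destruct (map_eq_app _ _ _ _ (eq_sym Hy')) as [y1 [y2 [-> [H1 H2]]]].
  subst p. destruct (Forall2_lift f Hl _ _ Hf) as [xs [Hxs Hm]].
  exists xs; split; auto. apply msemb_perm; exists y1, y2; auto.
Qed.

Definition mset_map {A B : qo} (n : nat) (f : car A -> car B) (x : car (qmsetn A n)) : car (qmsetn B n) :=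
  exist _ (map f (proj1_sig x)) (eq_trans (length_map f _) (proj2_sig x)).

Lemma msemb_map_mono {A B} (R : A -> A -> Prop) (R' : B -> B -> Prop) f :
  (forall x y, R x y -> R' (f x) (f y)) ->
  forall xs ys, msemb R xs ys -> msemb R' (map f xs) (map f ys).
Proof.
  intros H xs ys Hm. apply msemb_perm in Hm as [p [r [Hp Hf]]].
  apply msemb_perm; exists (map f p), (map f r); split.
  - rewrite <- map_app; apply Permutation_map; auto.
  - eapply Forall2_map_mono; eauto.
Qed.

Lemma msemb_map_refl {A B} (R : A -> A -> Prop) (R' : B -> B -> Prop) f :
  (forall x y, R' (f x) (f y) -> R x y) ->
  forall xs ys, msemb R' (map f xs) (map f ys) -> msemb R xs ys.
Proof.
  intros H xs ys Hm. apply msemb_perm in Hm as [p [r [Hp Hf]]].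
  destruct (Permutation_map_inv _ _ (Permutation_sym Hp)) as [y' [Hy' Hpy]].
  destruct (map_eq_app _ _ _ _ (eq_sym Hy')) as [y1 [y2 [-> [H1 H2]]]].
  subst p. apply msemb_perm; exists y1, y2; split; auto.
  eapply Forall2_map_refl; eauto.
Qed.

Lemma msemb_length {A} (R : A -> A -> Prop) l1 l2 : msemb R l1 l2 -> length l1 <= length l2.
Proof.
  intro H; induction H; simpl; [lia|rewrite length_app in *; simpl; lia].
Qed.

Lemma cond_mset A B n : le_cond A B -> le_cond (qmsetn A n) (qmsetn B n).
Proof.
  intros [f [Hs [Hm Hl]]]. exists (mset_map n f). split; [|split].
  - intros [b Hb]. destruct (surj_list f Hs b) as [xs Hx].
    assert (Hlen : length xs = n) by (rewrite <- Hb, <- Hx, length_map; reflexivity).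
    exists (exist _ xs Hlen). apply sig_ext; simpl; auto.
  - intros [x Hx] [y Hy]; simpl; apply msemb_map_mono; auto.
  - intros [b Hb] [y Hy]; simpl; intro H.
    destruct (msemb_lift f Hl _ _ H) as [xs [Hxs Hf]].
    assert (Hlen : length xs = n) by (rewrite <- Hb, <- Hf, length_map; reflexivity).
    exists (exist _ xs Hlen); split; [exact Hxs|apply sig_ext; simpl; auto].
Qed.

Lemma st_mset A B n : le_st A B -> le_st (qmsetn A n) (qmsetn B n).
Proof.
  intros [f [Hi Ho]]. exists (mset_map n f). split.
  - intros [x Hx] [y Hy] H; apply sig_ext; simpl.
    apply (f_equal (@proj1_sig _ _)) in H; simpl in H; eapply map_inj; eauto.
  - intros [x Hx] [y Hy]; simpl; split.
    + apply msemb_map_mono; intros; apply Ho; auto.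
    + apply msemb_map_refl; intros; apply Ho; auto.
Qed.

Lemma cs_mset A B n : le_cond_st A B -> le_cond_st (qmsetn A n) (qmsetn B n).
Proof. apply (cs_functor (fun X => qmsetn X n)); intros; [apply cond_mset|apply st_mset]; auto. Qed.

Lemma hoare_lift {A B : qo} (f : car A -> car B) :
  (forall b y, le B b (f y) -> exists x, le A x y /\ f x = b) ->
  forall bs ys, hoare (le B) bs (map f ys) -> exists xs, hoare (le A) xs ys /\ map f xs = bs.
Proof.
  intros Hl bs; induction bs as [|b bs IH]; intros ys H.
  - exists []; split; [intros a []|reflexivity].
  - destruct (H b (or_introl eq_refl)) as [c [Hc Hbc]].
    apply in_map_iff in Hc as [y [<- Hy]].
    destruct (Hl _ _ Hbc) as [x [Hx Hfx]].
    destruct (IH ys) as [xs [Hxs Hf]]; [intros a Ha; apply H; simpl; auto|].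
    exists (x :: xs); split; [|simpl; congruence].
    intros a [<-|Ha]; [exists y; auto|apply Hxs; auto].
Qed.

Lemma cond_pf A B : le_cond A B -> le_cond (qpf A) (qpf B).
Proof.
  intros [f [Hs [Hm Hl]]]. exists (map f). split; [|split].
  - apply surj_list; auto.
  - intros x y H b Hb; simpl in *. apply in_map_iff in Hb as [a [<- Ha]].
    destruct (H a Ha) as [c [Hc Hac]]; exists (f c); split; [apply in_map; auto|auto].
  - intros b y H; simpl in *; apply hoare_lift; auto.
Qed.

Lemma st_pf A B : le_st A B -> le_st (qpf A) (qpf B).
Proof.
  intros [f [Hi Ho]]. exists (map f). split.
  - intros; eapply map_inj; eauto.
  - intros x y; simpl; split.
    + intros H b Hb. apply in_map_iff in Hb as [a [<- Ha]].
      destruct (H a Ha) as [c [Hc Hac]]; exists (f c); split; [apply in_map; auto|apply Ho; auto].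
    + intros H a Ha. destruct (H (f a) (in_map _ _ _ Ha)) as [c [Hc Hac]].
      apply in_map_iff in Hc as [y' [<- Hy']]. exists y'; split; auto; apply Ho; auto.
Qed.

Lemma cs_pf A B : le_cond_st A B -> le_cond_st (qpf A) (qpf B).
Proof. apply (cs_functor qpf); intros; [apply cond_pf|apply st_pf]; auto. Qed.

Definition Bk (k : nat) (X : qo) : qo :=
  QO ({i : nat | i < k} + car X)%type
     (fun u v => match u, v with
       | inl i, inl j => proj1_sig i <= proj1_sig j
       | inl _, inr _ => True
       | inr _, inl _ => False
       | inr a, inr b => le X a b end).

Definition lvl {k X} (u : car (Bk k X)) : nat :=
  match u with inl i => proj1_sig i | inr _ => k end.

Lemma lvl_bound {k X} (u : car (Bk k X)) : lvl u <= k.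
Proof. destruct u as [[i Hi]|a]; simpl; lia. Qed.

Lemma le_lvl {k X} (u v : car (Bk k X)) : le (Bk k X) u v -> lvl u <= lvl v.
Proof. destruct u as [[i Hi]|a], v as [[j Hj]|b]; simpl; intuition lia. Qed.

Fixpoint maxlvl {k X} (l : list (car (Bk k X))) : nat :=
  match l with [] => 0 | u :: l' => Nat.max (lvl u) (maxlvl l') end.

Lemma maxlvl_app {k X} (l1 l2 : list (car (Bk k X))) :
  maxlvl (l1 ++ l2) = Nat.max (maxlvl l1) (maxlvl l2).
Proof. induction l1; cbn [maxlvl app]; [lia|rewrite IHl1; lia]. Qed.

Lemma maxlvl_In {k X} (l : list (car (Bk k X))) u : In u l -> lvl u <= maxlvl l.
Proof. induction l; simpl; [tauto|intros [->|H]; [lia|specialize (IHl H); lia]]. Qed.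

Lemma maxlvl_le {k X} (l : list (car (Bk k X))) m : (forall u, In u l -> lvl u <= m) -> maxlvl l <= m.
Proof. induction l; simpl; intros H; [lia|]. assert (lvl a <= m) by auto. assert (maxlvl l <= m) by auto. lia. Qed.

Lemma maxlvl_bound {k X} (l : list (car (Bk k X))) : maxlvl l <= k.
Proof. apply maxlvl_le; intros; apply lvl_bound. Qed.

Lemma maxlvl_perm {k X} (l l' : list (car (Bk k X))) : Permutation l l' -> maxlvl l = maxlvl l'.
Proof. induction 1; simpl; lia. Qed.

Lemma Forall2_maxlvl {k X} (x y : list (car (Bk k X))) :
  Forall2 (le (Bk k X)) x y -> maxlvl x <= maxlvl y.
Proof. induction 1; simpl; [lia|]. apply le_lvl in H. lia. Qed.

Lemma Forall2_maxlvl_min {k X} (x y : list (car (Bk k X))) m :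
  Forall2 (fun a b => Nat.min (lvl b) m <= lvl a) x y -> Nat.min (maxlvl y) m <= maxlvl x.
Proof. induction 1; simpl; lia. Qed.

Definition bot {k X} (m : nat) : car (Bk (S k) X) :=
  inl (exist _ (Nat.min m k) (proj2 (Nat.lt_succ_r _ _) (Nat.le_min_r m k))).

Lemma lvl_bot {k X} m : lvl (@bot k X m) = Nat.min m k.
Proof. reflexivity. Qed.

Lemma bot_le {k X} m (u : car (Bk (S k) X)) : Nat.min m k <= lvl u -> le _ (@bot k X m) u.
Proof. destruct u as [[i Hi]|a]; simpl; auto. Qed.

Fixpoint somes {k X} (l : list (car (Bk k X))) : list (car X) :=
  match l with [] => [] | inl _ :: l' => somes l' | inr a :: l' => a :: somes l' end.

Lemma somes_app {k X} (l1 l2 : list (car (Bk k X))) : somes (l1 ++ l2) = somes l1 ++ somes l2.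
Proof. induction l1 as [|[i|a] l1 IH]; cbn [somes app]; auto; rewrite IH; auto. Qed.

Lemma somes_inr {k X} (w : list (car X)) : @somes k X (map inr w) = w.
Proof. induction w; simpl; f_equal; auto. Qed.

Lemma somes_bots {k X} (f : car (Bk (S k) X) -> nat) y : @somes (S k) X (map (fun u => bot (f u)) y) = [].
Proof. induction y; simpl; auto. Qed.

Lemma somes_len {k X} (l : list (car (Bk k X))) : length (somes l) <= length l.
Proof. induction l as [|[i|a] l IH]; cbn [somes length]; lia. Qed.

Lemma maxlvl_bots {k X} j (y : list (car (Bk (S k) X))) : j <= k ->
  maxlvl (map (fun u => @bot k X (Nat.min j (lvl u))) y) = Nat.min j (maxlvl y).
Proof. intro Hj; induction y; cbn [map maxlvl]; [lia|]. rewrite IHy, lvl_bot. pose proof (lvl_bound a). lia. Qed.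

Lemma Forall2_bots {k X} j (y : list (car (Bk (S k) X))) :
  Forall2 (le _) (map (fun u => @bot k X (Nat.min j (lvl u))) y) y.
Proof. induction y; simpl; constructor; auto. apply bot_le. lia. Qed.

Lemma somes_In {k X} (l : list (car (Bk k X))) a : In a (somes l) <-> In (inr a) l.
Proof.
  induction l as [|[i|b] l IH]; simpl; [tauto| |]; rewrite IH; [intuition discriminate|].
  split; intros [H|H]; auto; inversion H; auto.
Qed.

Lemma somes_perm {k X} (l l' : list (car (Bk k X))) : Permutation l l' -> Permutation (somes l) (somes l').
Proof.
  induction 1 as [| [i|a] l l' H IH| [i|a] [j|b] l| ]; simpl; auto; try constructor; auto.
  eapply Permutation_trans; eauto.
Qed.

Definition Dq (X : qo) (P : car X -> Prop) : qo :=
  QO {x | P x} (fun a b => le X (proj1_sig a) (proj1_sig b)).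

Lemma lift_list (X : qo) (P : car X -> Prop) w :
  Forall P w -> exists w' : list (car (Dq X P)), map (@proj1_sig _ _) w' = w.
Proof.
  induction 1 as [|a w Ha Hw [w' IH]]; [exists []; auto|].
  exists (exist _ a Ha :: w'); simpl; congruence.
Qed.

Lemma somes_P (X : qo) (P : car X -> Prop) {k} (l : list (car (Bk k (Dq X P)))) :
  Forall P (map (@proj1_sig _ _) (somes l)).
Proof. induction l as [|[i|[a Ha]] l IH]; simpl; auto. Qed.

Definition Wg (X : qo) (P : car X -> Prop) (Q : list (car X) -> Prop)
  (RL : list (car X) -> list (car X) -> Prop) : qo :=
  QO {w | Forall P w /\ Q w} (fun a b => RL (proj1_sig a) (proj1_sig b)).

Definition Fg {X P Q RL} (k : nat) (l : list (car (Bk (S k) (Dq X P))))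
  (HQ : Q (map (@proj1_sig _ _) (somes l))) : car (Bk k (Wg X P Q RL)) :=
  match lt_dec (maxlvl l) k with
  | left H => inl (exist _ (maxlvl l) H)
  | right _ => inr (exist _ (map (@proj1_sig _ _) (somes l)) (conj (somes_P X P l) HQ))
  end.

Lemma Fg_inl {X P Q RL} k (l : list (car (Bk (S k) (Dq X P)))) HQ j Hj : maxlvl l = j -> @Fg X P Q RL k l HQ = inl (exist _ j Hj).
Proof.
  intro E; unfold Fg; cbv beta in Hj; destruct (lt_dec (maxlvl l) k); [|lia].
  f_equal; apply sig_ext; simpl; auto.
Qed.

Lemma Fg_inr {X P Q RL} k (l : list (car (Bk (S k) (Dq X P)))) HQ w Hw : k <= maxlvl l -> map (@proj1_sig _ _) (somes l) = w ->
  @Fg X P Q RL k l HQ = inr (exist _ w Hw).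
Proof.
  intros E1 E2; unfold Fg; destruct (lt_dec (maxlvl l) k); [lia|].
  f_equal; apply sig_ext; simpl; auto.
Qed.

Lemma Fg_cases {X P Q RL} k (l : list (car (Bk (S k) (Dq X P)))) HQ :
  (maxlvl l < k /\ lvl (@Fg X P Q RL k l HQ) = maxlvl l) \/
  (k <= maxlvl l /\ exists w, @Fg X P Q RL k l HQ = inr w /\ proj1_sig w = map (@proj1_sig _ _) (somes l)).
Proof.
  unfold Fg; destruct (lt_dec (maxlvl l) k); [left; simpl; auto|right; split; [lia|]].
  eexists; split; [reflexivity|reflexivity].
Qed.

Lemma Fg_mono {X P Q RL} k (l1 l2 : list (car (Bk (S k) (Dq X P)))) H1 H2 :
  maxlvl l1 <= maxlvl l2 ->
  (k <= maxlvl l1 -> RL (map (@proj1_sig _ _) (somes l1)) (map (@proj1_sig _ _) (somes l2))) ->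
  le _ (@Fg X P Q RL k l1 H1) (@Fg X P Q RL k l2 H2).
Proof.
  intros Hm Hs. unfold Fg.
  destruct (lt_dec (maxlvl l1) k), (lt_dec (maxlvl l2) k); simpl; auto; try lia.
  apply Hs; lia.
Qed.

Lemma Fg_le_inl {X P Q RL} k (l : list (car (Bk (S k) (Dq X P)))) HQ (i : {i | i < k}) :
  le (Bk k (Wg X P Q RL)) (inl i) (@Fg X P Q RL k l HQ) -> proj1_sig i <= maxlvl l.
Proof.
  destruct (@Fg_cases X P Q RL k l HQ) as [[H1 H2]|[H1 [w [E _]]]].
  - intro H. apply le_lvl in H. simpl in H. lia.
  - intros _. destruct i; simpl; lia.
Qed.

Lemma Fg_le_inr {X P Q RL} k (l : list (car (Bk (S k) (Dq X P)))) HQ w :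
  le (Bk k (Wg X P Q RL)) (inr w) (@Fg X P Q RL k l HQ) ->
  k <= maxlvl l /\ RL (proj1_sig w) (map (@proj1_sig _ _) (somes l)).
Proof.
  destruct (@Fg_cases X P Q RL k l HQ) as [[H1 H2]|[H1 [w' [E E']]]].
  - unfold Fg; destruct (lt_dec (maxlvl l) k); [simpl; tauto|lia].
  - rewrite E; simpl; intro H; split; auto; rewrite <- E'; auto.
Qed.

Lemma maxlvl_repeat_bot {k X} m n : @maxlvl (S k) X (repeat (@bot k X m) n) = if n then 0 else Nat.min m k.
Proof. induction n; cbn [repeat maxlvl]; [reflexivity|rewrite IHn, lvl_bot; destruct n; lia]. Qed.

Lemma somes_repeat_bot {k X} m n : @somes (S k) X (repeat (@bot k X m) n) = [].
Proof. induction n; simpl; auto. Qed.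

Lemma maxlvl_inr {k X} (w : list (car X)) u : maxlvl (@inr {i | i < k} _ u :: map inr w) >= k.
Proof. cbn [maxlvl lvl]. lia. Qed.

Definition Ww (X : qo) (P : car X -> Prop) (N : nat) : qo :=
  Wg X P (fun w => length w <= N) (subword (le X)).

Lemma somes_lenN {X P k N} (x : car (qpow (Bk (S k) (Dq X P)) N)) :
  length (map (@proj1_sig _ _) (somes (proj1_sig x))) <= N.
Proof. rewrite length_map; destruct x as [l Hl]; cbn [proj1_sig]; rewrite <- Hl; exact (somes_len l). Qed.

Definition Fw {X P k N} (x : car (qpow (Bk (S k) (Dq X P)) N)) : car (Bk k (Ww X P N)) :=
  @Fg X P (fun w => length w <= N) (subword (le X)) k (proj1_sig x) (somes_lenN x).

Lemma Forall2_subword {X P k} (x y : list (car (Bk k (Dq X P)))) :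
  Forall2 (le _) x y -> subword (le X) (map (@proj1_sig _ _) (somes x)) (map (@proj1_sig _ _) (somes y)).
Proof.
  induction 1 as [|[i|a] [j|b] x y H _ IH]; cbn [somes map] in *; try contradiction.
  - constructor.
  - exact IH.
  - apply sw_skip; exact IH.
  - apply sw_keep; auto.
Qed.

Lemma sw_lift {X P k} (y : list (car (Bk (S k) (Dq X P)))) (w : list (car X)) :
  Forall P w -> subword (le X) w (map (@proj1_sig _ _) (somes y)) ->
  exists x, Forall2 (le _) x y /\ map (@proj1_sig _ _) (somes x) = w /\
            Forall2 (fun a b => Nat.min (lvl b) k <= lvl a) x y.
Proof.
  revert w; induction y as [|[[i Hi]|b] y IH]; intros w HP Hs; cbn [somes map] in Hs.
  - inversion Hs; subst. exists []; split; [constructor|split; [reflexivity|constructor]].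
  - destruct (IH w HP Hs) as [x [H1 [H2 H3]]].
    exists (inl (exist _ i Hi) :: x); split; [constructor; auto; simpl; lia|split; [exact H2|constructor; auto; simpl; lia]].
  - inversion Hs as [l0|l0 y0 l2 Hsub E1 E2|a0 y0 w0 l2 Ha Hsub E1 E2]; subst.
    + destruct (IH [] HP (sw_nil _ _)) as [x [G1 [G2 G3]]].
      exists (bot k :: x); split; [constructor; auto; exact I|split; [exact G2|constructor; auto; rewrite lvl_bot; cbn [lvl]; lia]].
    + destruct (IH w HP Hsub) as [x [G1 [G2 G3]]].
      exists (bot k :: x); split; [constructor; auto; exact I|split; [exact G2|constructor; auto; rewrite lvl_bot; cbn [lvl]; lia]].
    + inversion HP as [|a1 w1 Ha0 Hw0]; subst.
      destruct (IH w0 Hw0 Hsub) as [xx [G1 [G2 G3]]].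
      exists (inr (exist _ a0 Ha0) :: xx); split; [constructor; auto|split; [simpl; congruence|constructor; auto; cbn [lvl]; lia]].
Qed.

Lemma cond_words X P k N : 1 <= N -> le_cond (Bk k (Ww X P N)) (qpow (Bk (S k) (Dq X P)) N).
Proof.
  intro HN. exists Fw. split; [|split].
  - intros [[j Hj]|[w [HP Hlen]]].
    + set (l := bot j :: repeat (@bot k (Dq X P) 0) (N - 1)).
      assert (Hl : length l = N) by (unfold l; simpl; rewrite repeat_length; lia).
      exists (exist _ l Hl). unfold Fw; simpl. apply Fg_inl.
      unfold l; cbn [maxlvl]; rewrite maxlvl_repeat_bot, lvl_bot. cbv beta in Hj; destruct (N - 1); cbv iota; lia.
    + destruct (lift_list X P w HP) as [w' Hw']. subst w.
      set (l := @app (car (Bk (S k) (Dq X P))) (map inr w') (repeat (@bot k (Dq X P) k) (N - length w'))).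
      assert (Hl : length l = N) by (unfold l; rewrite length_app, length_map, repeat_length; rewrite length_map in Hlen; cbn [car Dq] in *; lia).
      exists (exist _ l Hl). unfold Fw; simpl. apply Fg_inr.
      * unfold l; rewrite maxlvl_app, maxlvl_repeat_bot.
        destruct w' as [|u w'']; [cbn [map length maxlvl]; destruct N; simpl; lia|].
        pose proof (@maxlvl_inr (S k) (Dq X P) w'' u). cbn [map]. lia.
      * unfold l; rewrite somes_app, somes_repeat_bot, app_nil_r, somes_inr; auto.
  - intros [x Hx] [y Hy] H; simpl in H. unfold Fw; simpl. apply Fg_mono.
    + apply Forall2_maxlvl; auto.
    + intros _; apply Forall2_subword; auto.
  - intros [i|w] [y Hy] H.
    + unfold Fw in H; simpl in H. apply Fg_le_inl in H.
      set (l := map (fun u => @bot k (Dq X P) (Nat.min (proj1_sig i) (lvl u))) y).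
      assert (Hl : length l = N) by (unfold l; rewrite length_map; auto).
      exists (exist _ l Hl). split; [apply Forall2_bots|].
      unfold Fw; simpl. destruct i as [i Hi]; apply Fg_inl.
      unfold l; rewrite maxlvl_bots; simpl in *; lia.
    + unfold Fw in H; simpl in H. apply Fg_le_inr in H as [Hk Hs].
      destruct w as [w [HP Hlen]]; simpl in Hs.
      destruct (sw_lift y w HP Hs) as [x [H1 [H2 H3]]].
      assert (Hl : length x = N) by (rewrite (Forall2_length H1); auto).
      exists (exist _ x Hl). split; [exact H1|].
      unfold Fw; simpl. apply Fg_inr; auto.
      apply Forall2_maxlvl_min in H3. lia.
Qed.

Definition Wm (X : qo) (P : car X -> Prop) (N : nat) : qo :=
  Wg X P (fun w => length w <= N) (msemb (le X)).

Lemma somes_lenM {X P k N} (x : car (qmsetn (Bk (S k) (Dq X P)) N)) :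
  length (map (@proj1_sig _ _) (somes (proj1_sig x))) <= N.
Proof. rewrite length_map; destruct x as [l Hl]; cbn [proj1_sig]; rewrite <- Hl; exact (somes_len l). Qed.

Definition Fm {X P k N} (x : car (qmsetn (Bk (S k) (Dq X P)) N)) : car (Bk k (Wm X P N)) :=
  @Fg X P (fun w => length w <= N) (msemb (le X)) k (proj1_sig x) (somes_lenM x).

Lemma Forall2_somes_perm {X P k} (x p : list (car (Bk k (Dq X P)))) :
  Forall2 (le _) x p -> exists q r, Permutation (map (@proj1_sig _ _) (somes p)) (q ++ r) /\
     Forall2 (le X) (map (@proj1_sig _ _) (somes x)) q.
Proof.
  induction 1 as [|[i|a] [j|b] x p H _ [q [r [IH1 IH2]]]]; cbn [somes map] in *; try contradiction.
  - exists [], []; split; constructor.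
  - exists q, r; auto.
  - exists q, (proj1_sig b :: r); split; auto.
    eapply Permutation_trans; [apply perm_skip, IH1|apply Permutation_middle].
  - exists (proj1_sig b :: q), r; split; [simpl; apply perm_skip; auto|constructor; auto].
Qed.

Lemma msemb_mono_somes {X P k} (x y : list (car (Bk k (Dq X P)))) :
  msemb (le _) x y -> msemb (le X) (map (@proj1_sig _ _) (somes x)) (map (@proj1_sig _ _) (somes y)).
Proof.
  intro H; apply msemb_perm in H as [p [r [Hp Hf]]].
  destruct (Forall2_somes_perm x p Hf) as [q [r' [H1 H2]]].
  apply msemb_perm; exists q, (r' ++ map (@proj1_sig _ _) (somes r)); split; auto.
  eapply Permutation_trans; [apply Permutation_map; exact (somes_perm _ _ Hp)|].
  rewrite somes_app, map_app, app_assoc. apply Permutation_app_tail; auto.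
Qed.

Lemma msemb_maxlvl {k X} (x y : list (car (Bk k X))) : msemb (le _) x y -> maxlvl x <= maxlvl y.
Proof.
  intro H; apply msemb_perm in H as [p [r [Hp Hf]]].
  rewrite (maxlvl_perm _ _ Hp), maxlvl_app. apply Forall2_maxlvl in Hf. lia.
Qed.

Lemma somes_split {X P k} (y : list (car (Bk k (Dq X P)))) A c B :
  map (@proj1_sig _ _) (somes y) = A ++ c :: B ->
  exists y1 b y2, y = y1 ++ inr b :: y2 /\ proj1_sig b = c /\
     map (@proj1_sig _ _) (somes y1) = A /\ map (@proj1_sig _ _) (somes y2) = B.
Proof.
  revert A; induction y as [|[i|b] y IH]; intros A E; cbn [somes map] in E.
  - destruct A; discriminate.
  - destruct (IH A E) as [y1 [b [y2 [-> [E1 [E2 E3]]]]]].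
    exists (inl i :: y1), b, y2; repeat split; auto.
  - destruct A as [|a A]; simpl in E; inversion E; subst.
    + exists [], b, y; repeat split; auto.
    + destruct (IH A H1) as [y1 [b' [y2 [-> [E1 [E2 E3]]]]]].
      exists (inr b :: y1), b', y2; repeat split; auto. cbn [somes map]; congruence.
Qed.

Lemma msemb_match {X P k} (w : list (car X)) (y : list (car (Bk k (Dq X P)))) :
  msemb (le X) w (map (@proj1_sig _ _) (somes y)) ->
  exists ym yr, Permutation y (ym ++ yr) /\
    Forall2 (fun a u => exists b, u = inr b /\ le X a (proj1_sig b)) w ym.
Proof.
  intro H; remember (map (@proj1_sig _ _) (somes y)) as L eqn:EL; revert y EL.
  induction H as [l|a c l1 l2a l2b Hac H IH]; intros y EL.
  - exists [], y; split; [apply Permutation_refl|constructor].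
  - destruct (somes_split y l2a c l2b (eq_sym EL)) as [y1 [b [y2 [-> [E1 [E2 E3]]]]]].
    destruct (IH (y1 ++ y2)) as [ym [yr [Hp Hf]]].
    { rewrite (somes_app (k:=k) (X:=Dq X P)), map_app, <- E2, <- E3; reflexivity. }
    exists (inr b :: ym), yr; split.
    + eapply Permutation_trans; [apply Permutation_sym, Permutation_middle|]. simpl; apply perm_skip; auto.
    + constructor; auto. exists b; split; auto; congruence.
Qed.

Lemma Forall2_match_lift {X P k} (w' : list (car (Dq X P))) (ym : list (car (Bk k (Dq X P)))) :
  Forall2 (fun a u => exists b, u = inr b /\ le X a (proj1_sig b)) (map (@proj1_sig _ _) w') ym ->
  Forall2 (le (Bk k (Dq X P))) (map inr w') ym.
Proof.
  revert ym; induction w' as [|a w' IH]; intros [|u ym] H; inversion H; subst; constructor; auto.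
  destruct H3 as [b [-> Hb]]; exact Hb.
Qed.

Lemma cond_msets X P k N : 1 <= N -> le_cond (Bk k (Wm X P N)) (qmsetn (Bk (S k) (Dq X P)) N).
Proof.
  intro HN. exists Fm. split; [|split].
  - intros [[j Hj]|[w [HP Hlen]]].
    + set (l := bot j :: repeat (@bot k (Dq X P) 0) (N - 1)).
      assert (Hl : length l = N) by (unfold l; simpl; rewrite repeat_length; lia).
      exists (exist _ l Hl). unfold Fm; simpl. apply Fg_inl.
      unfold l; cbn [maxlvl]; rewrite maxlvl_repeat_bot, lvl_bot. cbv beta in Hj; destruct (N - 1); cbv iota; lia.
    + destruct (lift_list X P w HP) as [w' Hw']. subst w.
      set (l := @app (car (Bk (S k) (Dq X P))) (map inr w') (repeat (@bot k (Dq X P) k) (N - length w'))).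
      assert (Hl : length l = N) by (unfold l; rewrite length_app, length_map, repeat_length; rewrite length_map in Hlen; cbn [car Dq] in *; lia).
      exists (exist _ l Hl). unfold Fm; simpl. apply Fg_inr.
      * unfold l; rewrite maxlvl_app, maxlvl_repeat_bot.
        destruct w' as [|u w'']; [cbn [map length maxlvl]; destruct N; simpl; lia|].
        pose proof (@maxlvl_inr (S k) (Dq X P) w'' u). cbn [map]. lia.
      * unfold l; rewrite somes_app, somes_repeat_bot, app_nil_r, somes_inr; auto.
  - intros [x Hx] [y Hy] H; simpl in H. unfold Fm; simpl. apply Fg_mono.
    + apply msemb_maxlvl; auto.
    + intros _; apply msemb_mono_somes; auto.
  - intros [i|w] [y Hy] H.
    + unfold Fm in H; simpl in H. apply Fg_le_inl in H.
      set (l := map (fun u => @bot k (Dq X P) (Nat.min (proj1_sig i) (lvl u))) y).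
      assert (Hl : length l = N) by (unfold l; rewrite length_map; auto).
      exists (exist _ l Hl). split.
      * change (msemb (le (Bk (S k) (Dq X P))) l y).
        apply msemb_perm; exists y, []; split; [rewrite app_nil_r; apply Permutation_refl|apply Forall2_bots].
      * unfold Fm; simpl. destruct i as [i Hi]; apply Fg_inl.
        unfold l; rewrite maxlvl_bots; simpl in *; lia.
    + unfold Fm in H; simpl in H. apply Fg_le_inr in H as [Hk Hs].
      destruct w as [w [HP Hlen]]; simpl in Hs.
      destruct (lift_list X P w HP) as [w' Hw']. subst w.
      destruct (msemb_match _ y Hs) as [ym [yr [Hp Hf]]].
      set (x := @app (car (Bk (S k) (Dq X P))) (map inr w') (map (fun u => @bot k (Dq X P) (Nat.min k (lvl u))) yr)).
      assert (Hf2 := Forall2_match_lift w' ym Hf).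
      assert (Hxl : length x = N).
      { pose proof (Forall2_length Hf2) as HL. rewrite length_map in HL.
        unfold x; rewrite length_app, !length_map.
        rewrite <- Hy, (Permutation_length Hp), length_app. cbn [car Dq Bk] in *. lia. }
      exists (exist _ x Hxl). split.
      * change (msemb (le (Bk (S k) (Dq X P))) x y).
        apply msemb_perm; exists (ym ++ yr), []; split; [rewrite app_nil_r; auto|].
        unfold x; apply Forall2_app; auto. apply Forall2_bots.
      * unfold Fm; simpl. apply Fg_inr.
        -- unfold x; rewrite maxlvl_app, maxlvl_bots by lia.
           destruct w' as [|u w''].
           ++ inversion Hf; subst. simpl in Hp. rewrite <- (@maxlvl_perm (S k) (Dq X P) _ _ Hp). lia.
           ++ pose proof (@maxlvl_inr (S k) (Dq X P) w'' u). cbn [map] in *. lia.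
        -- unfold x; rewrite somes_app, somes_bots, app_nil_r, somes_inr; auto.
Qed.

Definition Wp (X : qo) (P : car X -> Prop) : qo :=
  Wg X P (fun _ => True) (hoare (le X)).

Definition Fp {X P k} (x : car (qpf (Bk (S k) (Dq X P)))) : car (Bk k (Wp X P)) :=
  @Fg X P (fun _ => True) (hoare (le X)) k x I.

Lemma hoare_maxlvl {k X} (x y : list (car (Bk k X))) : hoare (le _) x y -> maxlvl x <= maxlvl y.
Proof.
  intro H; apply maxlvl_le; intros u Hu. destruct (H u Hu) as [v [Hv Huv]].
  apply le_lvl in Huv. apply maxlvl_In in Hv. lia.
Qed.

Lemma hoare_somes {X P k} (x y : list (car (Bk k (Dq X P)))) :
  hoare (le _) x y -> hoare (le X) (map (@proj1_sig _ _) (somes x)) (map (@proj1_sig _ _) (somes y)).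
Proof.
  intros H a Ha. apply in_map_iff in Ha as [a' [<- Ha']].
  apply (@somes_In k (Dq X P)) in Ha'. destruct (H _ Ha') as [[i|b'] [Hv Hle]]; [contradiction|].
  exists (proj1_sig b'); split; [apply in_map, (@somes_In k (Dq X P)); auto|exact Hle].
Qed.

Lemma cond_pfs X P k : le_cond (Bk k (Wp X P)) (qpf (Bk (S k) (Dq X P))).
Proof.
  exists Fp. split; [|split].
  - intros [[j Hj]|[w [HP HT]]].
    + exists [bot j]. unfold Fp. apply Fg_inl. cbn [maxlvl]. rewrite lvl_bot. cbv beta in Hj. lia.
    + destruct (lift_list X P w HP) as [w' Hw']. subst w.
      exists (bot k :: map inr w'). unfold Fp. apply Fg_inr.
      * cbn [maxlvl]; rewrite lvl_bot; lia.
      * cbn [somes]; rewrite somes_inr; reflexivity.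
  - intros x y H. unfold Fp. apply Fg_mono.
    + apply hoare_maxlvl; auto.
    + intros _; apply hoare_somes; auto.
  - intros [i|w] y H.
    + unfold Fp in H. apply Fg_le_inl in H.
      exists (map (fun u => @bot k (Dq X P) (Nat.min (proj1_sig i) (lvl u))) y). split.
      * intros a Ha. apply in_map_iff in Ha as [u [<- Hu]]. exists u; split; auto. apply bot_le; lia.
      * unfold Fp. destruct i as [i Hi]; apply Fg_inl. rewrite maxlvl_bots; simpl in *; lia.
    + unfold Fp in H. apply Fg_le_inr in H as [Hk Hs].
      destruct w as [w [HP HT]]; simpl in Hs.
      destruct (lift_list X P w HP) as [w' Hw']. subst w.
      exists (@app (car (Bk (S k) (Dq X P))) (map inr w') (map (fun u => @bot k (Dq X P) (Nat.min k (lvl u))) y)). split.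
      * intros a Ha. apply in_app_or in Ha as [Ha|Ha].
        -- apply in_map_iff in Ha as [a' [<- Ha']].
           destruct (Hs (proj1_sig a') (in_map _ _ _ Ha')) as [c [Hc Hac]].
           apply in_map_iff in Hc as [b' [<- Hb']]. exists (inr b'); split; [apply (@somes_In (S k) (Dq X P)); auto|exact Hac].
        -- apply in_map_iff in Ha as [u [<- Hu]]. exists u; split; auto. apply bot_le; lia.
      * unfold Fp. apply Fg_inr.
        -- rewrite maxlvl_app, maxlvl_bots by lia. lia.
        -- rewrite somes_app, somes_bots, app_nil_r, somes_inr; auto.
Qed.

Fixpoint lefts {A B : Type} (S : list (A + B)) : list A :=
  match S with [] => [] | inl a :: S' => a :: lefts S' | inr _ :: S' => lefts S' end.
Fixpoint rights {A B : Type} (S : list (A + B)) : list B :=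
  match S with [] => [] | inl _ :: S' => rights S' | inr b :: S' => b :: rights S' end.

Lemma In_lefts {A B : Type} (S : list (A + B)) a : In a (lefts S) <-> In (inl a) S.
Proof. induction S as [|[x|x] S IH]; simpl; [tauto| |rewrite IH; intuition discriminate].
  rewrite IH; split; intros [H|H]; auto; [left; congruence|left; congruence]. Qed.
Lemma In_rights {A B : Type} (S : list (A + B)) a : In a (rights S) <-> In (inr a) S.
Proof. induction S as [|[x|x] S IH]; simpl; [tauto|rewrite IH; intuition discriminate|].
  rewrite IH; split; intros [H|H]; auto; [left; congruence|left; congruence]. Qed.

Lemma down_l {A B : qo} (S : list (car (qsum A B))) a :
  (exists y, In y (lefts S) /\ le A a y) -> exists y, In y S /\ le (qsum A B) (inl a) y.
Proof. intros [y [Hy H]]; exists (inl y); split; auto; apply In_lefts; auto. Qed.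
Lemma down_r {A B : qo} (S : list (car (qsum A B))) b :
  (exists y, In y (rights S) /\ le B b y) -> exists y, In y S /\ le (qsum A B) (inr b) y.
Proof. intros [y [Hy H]]; exists (inr y); split; auto; apply In_rights; auto. Qed.
Lemma up_l {A B : qo} (S : list (car (qsum A B))) a :
  (exists y, In y S /\ le (qsum A B) (inl a) y) -> exists y, In y (lefts S) /\ le A a y.
Proof. intros [[y|y] [Hy H]]; [exists y; split; auto; apply In_lefts; auto|contradiction]. Qed.
Lemma up_r {A B : qo} (S : list (car (qsum A B))) b :
  (exists y, In y S /\ le (qsum A B) (inr b) y) -> exists y, In y (rights S) /\ le B b y.
Proof. intros [[y|y] [Hy H]]; [contradiction|exists y; split; auto; apply In_rights; auto]. Qed.

Definition gsum {A B : qo} (S : list (car (qsum A B))) k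
  (x : car (qsum (Bk k (downset A (lefts S))) (Bk k (downset B (rights S))))) :
  car (Bk k (downset (qsum A B) S)) :=
  match x with
  | inl (inl i) => inl i
  | inl (inr a) => inr (exist _ (inl (proj1_sig a)) (down_l S _ (proj2_sig a)))
  | inr (inl i) => inl i
  | inr (inr b) => inr (exist _ (inr (proj1_sig b)) (down_r S _ (proj2_sig b)))
  end.

Lemma sum_step (A B : qo) (S : list (car (qsum A B))) k :
  le_cond (Bk k (downset (qsum A B) S))
          (qsum (Bk k (downset A (lefts S))) (Bk k (downset B (rights S)))).
Proof.
  exists (gsum S k). split; [|split].
  - intros [i|[[a|b] p]].
    + exists (inl (inl i)); reflexivity.
    + exists (inl (inr (exist _ a (up_l S a p)))). simpl. f_equal. apply sig_ext; reflexivity.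
    + exists (inr (inr (exist _ b (up_r S b p)))). simpl. f_equal. apply sig_ext; reflexivity.
  - intros [[i|a]|[i|b]] [[j|a']|[j|b']]; simpl; tauto.
  - intros bb [[j|[a' pa']]|[j|[b' pb']]] H; destruct bb as [i|[[a|b] p]]; simpl in H; try contradiction.
    + exists (inl (inl i)); split; [exact H|reflexivity].
    + exists (inl (inl i)); split; [exact I|reflexivity].
    + exists (inl (inr (exist _ a (up_l S a p)))); split; [exact H|]. simpl; f_equal; apply sig_ext; reflexivity.
    + exists (inr (inl i)); split; [exact H|reflexivity].
    + exists (inr (inl i)); split; [exact I|reflexivity].
    + exists (inr (inr (exist _ b (up_r S b p)))); split; [exact H|]. simpl; f_equal; apply sig_ext; reflexivity.
Qed.

Lemma down_fst {A B : qo} (S : list (car (qprod A B))) x :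
  (exists y, In y S /\ le (qprod A B) x y) -> exists y, In y (map fst S) /\ le A (fst x) y.
Proof. intros [y [Hy [H1 H2]]]; exists (fst y); split; auto; apply in_map; auto. Qed.
Lemma down_snd {A B : qo} (S : list (car (qprod A B))) x :
  (exists y, In y S /\ le (qprod A B) x y) -> exists y, In y (map snd S) /\ le B (snd x) y.
Proof. intros [y [Hy [H1 H2]]]; exists (snd y); split; auto; apply in_map; auto. Qed.

Lemma prod_st (A B : qo) (S : list (car (qprod A B))) k :
  le_st (Bk k (downset (qprod A B) S))
        (Bk k (qprod (downset A (map fst S)) (downset B (map snd S)))).
Proof.
  exists (fun u : car (Bk k (downset (qprod A B) S)) => match u with
    | inl i => inl i
    | inr x => inr (exist _ (fst (proj1_sig x)) (down_fst S _ (proj2_sig x)),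
                    exist _ (snd (proj1_sig x)) (down_snd S _ (proj2_sig x)))
    end : car (Bk k (qprod (downset A (map fst S)) (downset B (map snd S))))).
  split.
  - intros [i|[[a b] p]] [i'|[[a' b'] p']] H; inversion H; subst; auto.
    f_equal; apply sig_ext; reflexivity.
  - intros [i|[[a b] p]] [i'|[[a' b'] p']]; simpl; tauto.
Qed.

Definition gprod {k} {A B : qo} (x : car (qprod (Bk k A) (Bk k B))) : car (Bk k (qprod A B)) :=
  match x with
  | (inl i, inl j) => inl (exist _ (Nat.min (proj1_sig i) (proj1_sig j))
                           (Nat.le_lt_trans _ _ _ (Nat.le_min_l _ _) (proj2_sig i)))
  | (inl i, inr _) => inl i
  | (inr _, inl j) => inl j
  | (inr a, inr b) => inr (a, b)
  end.

Lemma prod_cond (A B : qo) k : le_cond (Bk k (qprod A B)) (qprod (Bk k A) (Bk k B)).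
Proof.
  exists gprod. split; [|split].
  - intros [i|[a b]].
    + exists (inl i, inl i). simpl. f_equal. apply sig_ext; simpl; lia.
    + exists (inr a, inr b); reflexivity.
  - intros [[[i Hi]|a] [[j Hj]|b]] [[[i' Hi']|a'] [[j' Hj']|b']] [H1 H2]; simpl in *; try tauto; lia.
  - intros [[i Hi]|[a b]] [[[i' Hi']|a'] [[j' Hj']|b']] H; simpl in H; try contradiction.
    + exists (inl (exist _ i Hi), inl (exist _ i Hi)); split; [simpl; split; lia|simpl; f_equal; apply sig_ext; simpl; lia].
    + exists (inl (exist _ i Hi), inl (exist _ i Hi)); split; [simpl; split; [lia|exact I]|simpl; f_equal; apply sig_ext; simpl; lia].
    + exists (inl (exist _ i Hi), inl (exist _ i Hi)); split; [simpl; split; [exact I|lia]|simpl; f_equal; apply sig_ext; simpl; lia].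
    + exists (inl (exist _ i Hi), inl (exist _ i Hi)); split; [simpl; split; exact I|simpl; f_equal; apply sig_ext; simpl; lia].
    + exists (inr a, inr b); split; [exact H|reflexivity].
Qed.

Fixpoint list_sum' (l : list nat) : nat := match l with [] => 0 | n :: l' => n + list_sum' l' end.

Lemma len_bound {A} (S : list (list A)) s : In s S -> length s <= list_sum' (map (@length A) S).
Proof. induction S; simpl; [tauto|intros [->|H]; [lia|specialize (IHS H); lia]]. Qed.

Lemma subword_props {A} (R : A -> A -> Prop) w s : subword R w s ->
  Forall (fun x => exists y, In y s /\ R x y) w /\ length w <= length s.
Proof.
  induction 1 as [l|l1 y l2 H [IH1 IH2]|x y l1 l2 Hxy H [IH1 IH2]]; simpl.
  - split; [constructor|lia].
  - split; [|lia]. eapply Forall_impl; [|exact IH1]. intros a [b [Hb Hab]]; exists b; auto.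
  - split; [|lia]. constructor; [exists y; auto|]. eapply Forall_impl; [|exact IH1]. intros a [b [Hb Hab]]; exists b; auto.
Qed.

Lemma msemb_props {A} (R : A -> A -> Prop) w s : msemb R w s ->
  Forall (fun x => exists y, In y s /\ R x y) w.
Proof.
  induction 1 as [l|x y l1 l2a l2b Hxy H IH]; constructor.
  - exists y; split; auto; apply in_or_app; simpl; auto.
  - eapply Forall_impl; [|exact IH]. intros a [b [Hb Hab]]; exists b; split; auto.
    apply in_app_or in Hb as [Hb|Hb]; apply in_or_app; simpl; auto.
Qed.

Lemma hoare_props {A} (R : A -> A -> Prop) w s : hoare R w s ->
  Forall (fun x => exists y, In y s /\ R x y) w.
Proof. intro H; apply Forall_forall; auto. Qed.

Lemma Forall_concat {A} (R : A -> A -> Prop) (S : list (list A)) w s : In s S ->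
  Forall (fun x => exists y, In y s /\ R x y) w -> Forall (fun x => exists y, In y (concat S) /\ R x y) w.
Proof.
  intros Hs H; eapply Forall_impl; [|exact H]. intros a [b [Hb Hab]]; exists b; split; auto.
  apply in_concat; eauto.
Qed.

Definition PT (X : qo) (T : list (car X)) := fun x => exists y, In y T /\ le X x y.

Lemma words_down (X : qo) (S : list (list (car X))) w :
  (exists s, In s S /\ subword (le X) w s) ->
  Forall (PT X (concat S)) w /\ length w <= Datatypes.S (list_sum' (map (@length _) S)).
Proof.
  intros [s [Hs H]]. apply subword_props in H as [H1 H2]. split.
  - eapply Forall_concat; eauto.
  - pose proof (len_bound S s Hs). lia.
Qed.

Lemma words_st (X : qo) (S : list (list (car X))) k :
  le_st (Bk k (downset (qwords X) S)) (Bk k (Ww X (PT X (concat S)) (Datatypes.S (list_sum' (map (@length _) S))))).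
Proof.
  exists (fun u : car (Bk k (downset (qwords X) S)) => match u with
    | inl i => inl i
    | inr x => inr (exist _ (proj1_sig x) (words_down X S _ (proj2_sig x)))
    end : car (Bk k (Ww X (PT X (concat S)) (Datatypes.S (list_sum' (map (@length _) S)))))).
  split.
  - intros [i|[w p]] [i'|[w' p']] H; inversion H; subst; auto.
    f_equal; apply sig_ext; reflexivity.
  - intros [i|[w p]] [i'|[w' p']]; simpl; tauto.
Qed.

Lemma msets_down (X : qo) (S : list (list (car X))) w :
  (exists s, In s S /\ msemb (le X) w s) ->
  Forall (PT X (concat S)) w /\ length w <= Datatypes.S (list_sum' (map (@length _) S)).
Proof.
  intros [s [Hs H]]. pose proof (msemb_length _ _ _ H). apply msemb_props in H. split.
  - eapply Forall_concat; eauto.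
  - pose proof (len_bound S s Hs). lia.
Qed.

Lemma msets_st (X : qo) (S : list (list (car X))) k :
  le_st (Bk k (downset (qmset X) S)) (Bk k (Wm X (PT X (concat S)) (Datatypes.S (list_sum' (map (@length _) S))))).
Proof.
  exists (fun u : car (Bk k (downset (qmset X) S)) => match u with
    | inl i => inl i
    | inr x => inr (exist _ (proj1_sig x) (msets_down X S _ (proj2_sig x)))
    end : car (Bk k (Wm X (PT X (concat S)) (Datatypes.S (list_sum' (map (@length _) S)))))).
  split.
  - intros [i|[w p]] [i'|[w' p']] H; inversion H; subst; auto.
    f_equal; apply sig_ext; reflexivity.
  - intros [i|[w p]] [i'|[w' p']]; simpl; tauto.
Qed.

Lemma pf_down (X : qo) (S : list (list (car X))) w :
  (exists s, In s S /\ hoare (le X) w s) -> Forall (PT X (concat S)) w /\ True.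
Proof.
  intros [s [Hs H]]. apply hoare_props in H. split; auto. eapply Forall_concat; eauto.
Qed.

Lemma pf_st (X : qo) (S : list (list (car X))) k :
  le_st (Bk k (downset (qpf X) S)) (Bk k (Wp X (PT X (concat S)))).
Proof.
  exists (fun u : car (Bk k (downset (qpf X) S)) => match u with
    | inl i => inl i
    | inr x => inr (exist _ (proj1_sig x) (pf_down X S _ (proj2_sig x)))
    end : car (Bk k (Wp X (PT X (concat S))))).
  split.
  - intros [i|[w p]] [i'|[w' p']] H; inversion H; subst; auto.
    f_equal; apply sig_ext; reflexivity.
  - intros [i|[w p]] [i'|[w' p']]; simpl; tauto.
Qed.

Lemma Acc_irrefl {A} (R : A -> A -> Prop) x : Acc R x -> ~ R x x.
Proof. induction 1 as [x _ IH]; intro H; exact (IH x H H). Qed.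

Lemma cnf_irrefl {A} (R : A -> A -> Prop) : (forall a, ~ R a a) -> forall l, ~ cnf_lt R l l.
Proof.
  intros HR l H. remember l as l' eqn:E. rewrite E in H at 2.
  revert E; induction H; intro E; inversion E; subst; auto.
  - apply (HR b); auto.
  - lia.
Qed.

Lemma cnf_not_nil {A} (R : A -> A -> Prop) l : ~ cnf_lt R l [].
Proof. intro H; inversion H. Qed.

Lemma cnf_cons_inv {A} (R : A -> A -> Prop) a n l b m l' :
  cnf_lt R ((a, n) :: l) ((b, m) :: l') -> R a b \/ (a = b /\ n < m) \/ (a = b /\ n = m /\ cnf_lt R l l').
Proof. intro H; inversion H; subst; auto. Qed.

Fixpoint fin {G : Type} (n : nat) : list (list G * nat) :=
  match n with 0 => [] | Datatypes.S n' => [([], Datatypes.S n')] end.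

Lemma ord_case (a : ordinal) : mult_indec_big a -> forall k (S : list (ocar a)),
  exists E', approx (EOrd a) E' /\ (forall x, le E' x x) /\
    le_cond_st (Bk k (downset (ord_qo a) S)) E'.
Proof.
  intros [g [h [[g0] [Hval [Hsurj Hord]]]]] k S.
  set (R0 := olt g). set (R1 := cnf_lt R0). set (R2 := cnf_lt R1).
  assert (R0irr : forall x, ~ R0 x x) by (intro x; apply Acc_irrefl, olt_wf).
  assert (R1irr : forall x, ~ R1 x x) by (apply cnf_irrefl; auto).
  assert (R2irr : forall x, ~ R2 x x) by (apply cnf_irrefl; auto).
  assert (hinj : forall x y, h x = h y -> x = y).
  { intros x y E. destruct (olt_total a x y) as [H|[H|H]]; auto;
    apply Hord in H; rewrite E in H; exfalso; eapply R2irr; eauto. }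
  assert (Hz : exists z, h z = []) by (apply Hsurj; split; constructor).
  destruct Hz as [z0 Hz0].
  assert (Hmax : exists m, forall y, In y S -> olt a y m \/ y = m).
  { clear -z0. induction S as [|y S [m Hm]]; [exists z0; intros y []|].
    destruct (olt_total a y m) as [H|[H|H]].
    - exists m; intros y' [<-|Hy]; auto.
    - exists m; intros y' [<-|Hy]; auto.
    - exists y; intros y' [<-|Hy]; auto. left. destruct (Hm y' Hy) as [H'| ->]; auto. eapply olt_trans; eauto. }
  destruct Hmax as [m Hm].
  set (d := match h m with (d, _) :: _ => d | [] => [] end).
  set (e := match d with (c, kk) :: _ => [(c, Datatypes.S kk)] | [] => [(g0, 1)] end).
  assert (e_ne : e <> []) by (unfold e; destruct d as [|[c kk] r]; discriminate).
  assert (e_valid : cnf_valid R0 e) by (unfold e; destruct d as [|[c kk] r]; constructor; lia).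
  assert (nil_e : R1 [] e) by (unfold e; destruct d as [|[c kk] r]; constructor).
  assert (He : forall x, (olt a x m \/ x = m) -> h x = [] \/ exists d' n' r, h x = (d', n') :: r /\ R1 d' e).
  { intros x Hx.
    assert (Hx' : R2 (h x) (h m) \/ h x = h m) by (destruct Hx as [Hx| ->]; [left; apply Hord; auto|right; auto]).
    destruct (h x) as [|[d' n'] r] eqn:Ex; [left; auto|right; exists d', n', r; split; auto].
    assert (Hd : R1 d' d \/ d' = d).
    { unfold d; destruct (h m) as [|[dm nm] rm]; destruct Hx' as [Hx'|Hx'];
      [exfalso; eapply cnf_not_nil; eauto|discriminate| |inversion Hx'; auto].
      apply cnf_cons_inv in Hx' as [H|[[H _]|[H _]]]; auto. }
    unfold e; destruct d as [|[c kk] r'].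
    - destruct Hd as [Hd| ->]; [exfalso; eapply cnf_not_nil; eauto|constructor].
    - destruct d' as [|[c' k'] r'']; [constructor|].
      destruct Hd as [Hd|Hd].
      + apply cnf_cons_inv in Hd as [H|[[-> H]|[-> [-> _]]]]; [apply cnf_lt_exp; auto|apply cnf_lt_coef; lia|apply cnf_lt_coef; lia].
      + inversion Hd; subst; apply cnf_lt_coef; lia. }
  set (X := downset (ord_qo a) S).
  set (F := fun u : car (Bk k X) => match u with
           | inl i => @fin (ocar g * nat) (proj1_sig i)
           | inr x => (e, 1) :: h (proj1_sig x) end).
  assert (Fval : forall u, ww_valid g (F u)).
  { intros [[i Hi]|[x [y [Hy Hxy]]]]; simpl.
    - destruct i; simpl; split; [constructor|constructor|apply cnf_v_one; lia|constructor; [constructor|constructor]].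
    - assert (Hxm : olt a x m \/ x = m).
      { destruct (Hm y Hy) as [H| ->]; destruct Hxy as [H'| ->]; auto. left; eapply olt_trans; eauto. }
      destruct (Hval x) as [V1 V2]. split; [|constructor; auto].
      destruct (He x Hxm) as [E|[d' [n' [r [E Hd']]]]]; rewrite E in *; [constructor; lia|].
      constructor; auto; lia. }
  set (t' := [(e, 2)]).
  assert (t'val : ww_valid g t') by (split; repeat constructor; auto).
  destruct (Hsurj t' t'val) as [t Ht].
  assert (Fbound : forall u, R2 (F u) t').
  { intros [[i Hi]|x]; simpl.
    - destruct i; simpl; [constructor|apply cnf_lt_exp; exact nil_e].
    - apply cnf_lt_coef; lia. }
  assert (Finj : forall u v, F u = F v -> u = v).
  { intros [[i Hi]|[x px]] [[j Hj]|[y py]]; simpl; intro E.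
    - f_equal; apply sig_ext; simpl. destruct i, j; simpl in E; inversion E; auto.
    - destruct i; simpl in E; inversion E; exfalso; apply e_ne; congruence.
    - destruct j; simpl in E; inversion E; exfalso; apply e_ne; congruence.
    - inversion E as [E']. apply hinj in E'. f_equal; apply sig_ext; auto. }
  assert (Fle : forall u v, le (Bk k X) u v <-> R2 (F u) (F v) \/ F u = F v).
  { intros [[i Hi]|[x px]] [[j Hj]|[y py]]; simpl.
    - split.
      + intro H. destruct (Nat.eq_dec i j) as [->|Hne]; [right; auto|left].
        destruct i; destruct j; simpl; try lia; [constructor|apply cnf_lt_coef; lia].
      + intros [H|H].
        * destruct i; [lia|]. destruct j; simpl in H; [exfalso; eapply cnf_not_nil; eauto|].
          apply cnf_cons_inv in H as [H|[[_ H]|[_ [_ H]]]]; [exfalso; eapply R1irr; eauto|lia|inversion H].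
        * destruct i, j; simpl in H; inversion H; lia.
    - split; auto; intros _; left. destruct i; simpl; [constructor|apply cnf_lt_exp; exact nil_e].
    - split; [contradiction|]. intros [H|H].
      + destruct j; simpl in H; [eapply cnf_not_nil; eauto|].
        apply cnf_cons_inv in H as [H|[[H _]|[H _]]]; [eapply cnf_not_nil; eauto|auto|auto].
      + destruct j; simpl in H; inversion H; subst; auto.
    - split.
      + intros [H|H]; [left; apply cnf_lt_tail; apply Hord; auto|right; subst; auto].
      + intros [H|H].
        * apply cnf_cons_inv in H as [H|[[_ H]|[_ [_ H]]]]; [exfalso; eapply R1irr; eauto|lia|].
          left; apply Hord; auto.
        * inversion H as [H']; right; apply hinj; auto. }
  assert (Hpre : forall u, exists x, h x = F u /\ olt a x t).
  { intro u. destruct (Hsurj (F u) (Fval u)) as [x Hx]. exists x; split; auto.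
    apply Hord; rewrite Hx, Ht; apply Fbound. }
  exists (segment a t). split; [|split].
  - exists t. exists (fun x => x). split; [tauto|]. intro b; exists b; split; right; auto.
  - intro x; right; auto.
  - apply cs_st.
    exists (fun u => let s := constructive_indefinite_description _ (Hpre u) in
                   exist (fun x => olt a x t) (proj1_sig s) (proj2 (proj2_sig s))).
    split.
    + intros u v E. apply (f_equal (@proj1_sig _ _)) in E. simpl in E.
      destruct (constructive_indefinite_description _ (Hpre u)) as [xu [Hu Hu2]].
      destruct (constructive_indefinite_description _ (Hpre v)) as [xv [Hv Hv2]].
      simpl in E; subst. apply Finj; congruence.
    + intros u v. rewrite (Fle u v).
      destruct (constructive_indefinite_description _ (Hpre u)) as [xu [Hu Hu2]].
      destruct (constructive_indefinite_description _ (Hpre v)) as [xv [Hv Hv2]].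
      simpl. rewrite Hord, Hu, Hv. split; intros [H|H]; auto; right.
      * apply hinj; congruence.
      * congruence.
Qed.

Definition Inv (e : expr) : Prop := forall k (S : list (car (sem e))),
  exists E', approx e E' /\ (forall x, le E' x x) /\ le_cond_st (Bk k (downset (sem e) S)) E'.

Lemma wpo_refl E : (forall x, le E x x) -> wpo_iso E E.
Proof. intro H; exists (fun x => x); split; [tauto|intro b; exists b; auto]. Qed.

Lemma Forall2_refl {A} (R : A -> A -> Prop) : (forall x, R x x) -> forall l, Forall2 R l l.
Proof. intros H l; induction l; constructor; auto. Qed.

Lemma inv_all e : elementary e -> Inv e.
Proof.
  induction e as [a|e1 IH1 e2 IH2|e1 IH1 e2 IH2|e1 IH1|e1 IH1|e1 IH1]; simpl; intros He k S.
  - apply ord_case; auto.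
  - destruct He as [He1 He2].
    destruct (IH1 He1 k (lefts S)) as [E1 [A1 [R1 C1]]].
    destruct (IH2 He2 k (rights S)) as [E2 [A2 [R2 C2]]].
    exists (qsum E1 E2). split; [|split].
    + exists E1, E2; repeat split; auto. apply wpo_refl; intros [x|x]; simpl; auto.
    + intros [x|x]; simpl; auto.
    + eapply cs_trans; [apply cs_cond, (sum_step (sem e1) (sem e2) S k)|]. apply cs_sum; auto.
  - destruct He as [He1 He2].
    destruct (IH1 He1 k (map fst S)) as [E1 [A1 [R1 C1]]].
    destruct (IH2 He2 k (map snd S)) as [E2 [A2 [R2 C2]]].
    exists (qprod E1 E2). split; [|split].
    + exists E1, E2; repeat split; auto. apply wpo_refl; intros [x y]; simpl; auto.
    + intros [x y]; simpl; auto.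
    + eapply cs_trans; [apply cs_st, (prod_st (sem e1) (sem e2) S k)|].
      eapply cs_trans; [apply cs_cond, prod_cond|]. apply cs_prod; auto.
  - destruct (IH1 He (Datatypes.S k) (concat S)) as [E1 [A1 [R1 C1]]].
    set (N := Datatypes.S (list_sum' (map (@length _) S))).
    exists (qpow E1 N). split; [|split].
    + exists E1, N; split; auto. apply wpo_refl; intros [x Hx]; simpl; apply Forall2_refl; auto.
    + intros [x Hx]; simpl; apply Forall2_refl; auto.
    + eapply cs_trans; [apply cs_st, (words_st (sem e1) S k)|].
      eapply cs_trans; [apply cs_cond, (cond_words (sem e1) (PT (sem e1) (concat S)) k N); unfold N; lia|].
      apply cs_pow; exact C1.
  - destruct (IH1 He (Datatypes.S k) (concat S)) as [E1 [A1 [R1 C1]]].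
    set (N := Datatypes.S (list_sum' (map (@length _) S))).
    assert (Rm : forall x : car (qmsetn E1 N), le _ x x).
    { intros [x Hx]; simpl. apply msemb_perm; exists x, []; split; [rewrite app_nil_r; apply Permutation_refl|apply Forall2_refl; auto]. }
    exists (qmsetn E1 N). split; [|split].
    + exists E1, N; split; auto. apply wpo_refl; auto.
    + auto.
    + eapply cs_trans; [apply cs_st, (msets_st (sem e1) S k)|].
      eapply cs_trans; [apply cs_cond, (cond_msets (sem e1) (PT (sem e1) (concat S)) k N); unfold N; lia|].
      apply cs_mset; exact C1.
  - destruct (IH1 He (Datatypes.S k) (concat S)) as [E1 [A1 [R1 C1]]].
    assert (Rp : forall x : car (qpf E1), le _ x x) by (intros x b Hb; exists b; auto).
    exists (qpf E1). split; [|split].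
    + exists E1; split; auto. apply wpo_refl; auto.
    + auto.
    + eapply cs_trans; [apply cs_st, (pf_st (sem e1) S k)|].
      eapply cs_trans; [apply cs_cond, (cond_pfs (sem e1) (PT (sem e1) (concat S)) k)|].
      apply cs_pf; exact C1.
Qed.

Theorem mainTheorem19 (e : expr) :
  elementary e -> normal_form e ->
  forall S : list (car (sem e)),
    exists E' : qo, approx e E' /\ le_cond_st (downset (sem e) S) E'.
Proof.
  intros He _ S. destruct (inv_all e He 0 S) as [E' [A [R C]]].
  exists E'; split; auto. eapply cs_trans; [|exact C].
  apply cs_st. exists (fun x => inr x : car (Bk 0 (downset (sem e) S))). split.
  - intros x y H; inversion H; auto.
  - intros x y; simpl; tauto.
Qed.
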